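(* Let $1\le i<s\le u$ and let $\mathcal H$ be an $s$-graph with $\Delta_i(\mathcal H)\le\binom{x-i}{s-i}$ for some real $x\ge s$. If $x<u$ then $\mathcal H$ has no $u$-cliques. Otherwise, the $u$-graph $\mathcal U=\mathcal K^u(\mathcal H)$ (whose edges are the $u$-cliques of $\mathcal H$) satisfies $\Delta_i(\mathcal U)\le\binom{x-i}{u-i}$.
   Context: An $s$-graph is a family of $s$-subsets (edges) of a vertex set $V$. For $|I|=i$, $d_{\mathcal H}(I)$ is the number of edges containing $I$ and $\Delta_i(\mathcal H)=\max_{|I|=i}d_{\mathcal H}(I)$. For $u\ge s$, a $u$-clique of $\mathcal H$ is a $u$-set all of whose $s$-subsets are edges; $\mathcal K^u(\mathcal H)$ is the set of $u$-cliques. For real $x$, $\binom{x}{k}=x(x-1)\cdots(x-k+1)/k!$. *)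

(* Defs.v *)
From mathcomp Require Import all_boot all_order all_algebra.
From mathcomp Require Import reals.
Set Implicit Arguments. Unset Strict Implicit. Unset Printing Implicit Defensive.
Import Order.TTheory GRing.Theory Num.Theory.

Definition is_sgraph (T : finType) (s : nat) (H : {set {set T}}) : bool :=
  [forall e in H, #|e| == s].

Definition deg (T : finType) (H : {set {set T}}) (I : {set T}) : nat :=
  #|[set e in H | I \subset e]|.

Definition Delta (T : finType) (i : nat) (H : {set {set T}}) : nat :=
  \max_(I : {set T} | #|I| == i) deg H I.

Definition cliques (T : finType) (s u : nat) (H : {set {set T}}) : {set {set T}} :=
  [set U : {set T} | (#|U| == u) &&
     [forall S : {set T}, ((S \subset U) && (#|S| == s)) ==> (S \in H)]].

Definition rbinom (R : realType) (x : R) (k : nat) : R :=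
  (\prod_(j < k) (x - j%:R)) / (k`!)%:R.

(* Main.v *)
Require Import Defs.
From mathcomp Require Import all_boot all_order all_algebra.
From mathcomp Require Import reals.
From mathcomp Require Import lra ring zify.
Import Order.TTheory GRing.Theory Num.Theory.
Module MA.
Local Open Scope ring_scope.

Section RB.
Variable R : realType.

Lemma rbinom0 (y : R) : rbinom y 0 = 1.
Proof. by rewrite /rbinom big_ord0 fact0 divr1. Qed.

Lemma rbinom1 (y : R) : rbinom y 1 = y.
Proof. by rewrite /rbinom big_ord1 /= subr0 divr1. Qed.

Lemma rbinom_ge0 (y : R) k : k%:R <= y + 1 -> 0 <= rbinom y k.
Proof.
move=> hy; rewrite /rbinom divr_ge0 // prodr_ge0 // => j _.
have hj : (j.+1 <= k)%N := ltn_ord j.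
have : j.+1%:R <= k%:R :> R by rewrite ler_nat.
rewrite -addn1 natrD; lra.
Qed.

Lemma rbinomS (y : R) k : k.+1%:R * rbinom y k.+1 = (y - k%:R) * rbinom y k.
Proof.
rewrite /rbinom big_ord_recr /= factS natrM.
have h1 : (k.+1%:R : R) != 0 by rewrite pnatr_eq0.
have h2 : ((k`!)%:R : R) != 0 by rewrite pnatr_eq0 -lt0n fact_gt0.
set P := \prod_(_ < k) _. field. by rewrite h2 nat1r.
Qed.

Lemma rbinomSl (y : R) k : k.+1%:R * rbinom y k.+1 = y * rbinom (y - 1) k.
Proof.
rewrite /rbinom big_ord_recl /= subr0 factS natrM.
have h1 : (k.+1%:R : R) != 0 by rewrite pnatr_eq0.
have h2 : ((k`!)%:R : R) != 0 by rewrite pnatr_eq0 -lt0n fact_gt0.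
have -> : \prod_(i < k) (y - (bump 0 i)%:R) = \prod_(i < k) (y - 1 - i%:R).
  by apply: eq_bigr => j _; rewrite /bump /= add1n -addn1 natrD; lra.
set P := \prod_(_ < k) _. field. by rewrite h2 nat1r.
Qed.

Lemma pascal (y : R) k : rbinom y k.+1 = rbinom (y - 1) k.+1 + rbinom (y - 1) k.
Proof.
have h1 : (k.+1%:R : R) != 0 by rewrite pnatr_eq0.
apply: (mulfI h1).
rewrite mulrDr rbinomSl rbinomS.
rewrite -nat1r; ring.
Qed.

Lemma prod_le_fact k (z : R) : k%:R <= z <= k.+1%:R ->
  0 <= \prod_(j < k) (z - j%:R) <= (k.+1)`!%:R.
Proof.
elim: k z => [|k IH] z /andP[h1 h2].
  by rewrite big_ord0 ler01 /=.
rewrite big_ord_recl /= subr0.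
have -> : \prod_(i < k) (z - (bump 0 i)%:R) = \prod_(i < k) (z - 1 - i%:R).
  by apply: eq_bigr => j _; rewrite /bump /= add1n -addn1 natrD; lra.
have /andP[p1 p2] : 0 <= \prod_(j < k) (z - 1 - j%:R) <= (k.+1)`!%:R.
  apply: IH; rewrite -!nat1r in h1 h2 *; rewrite -?nat1r; apply/andP; split; lra.
have z0 : 0 <= z by rewrite -nat1r in h1; have := ler0n R k; lra.
rewrite mulr_ge0 //= factS natrM.
apply: ler_pM => //.
Qed.

Lemma rbinom_small (z : R) k : k%:R <= z <= k.+1%:R -> rbinom z k.+1 <= z - k%:R.
Proof.
move=> hz; have /andP[p1 p2] := @prod_le_fact k z hz.
have h1 : (k.+1%:R : R) != 0 by rewrite pnatr_eq0.
move/andP: hz => [a b].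
rewrite /rbinom big_ord_recr /= ler_pdivrMr; last by rewrite ltr0n fact_gt0.
rewrite mulrC; apply: ler_wpM2l; lra.
Qed.
End RB.
End MA.
Import MA.
Module MB.

Section Comb.
Variable T : finType.
Implicit Types (A B C S U : {set T}) (F G H : {set {set T}}).

Lemma cliquesP s u H U :
  reflect (#|U| = u /\ forall S, S \subset U -> #|S| = s -> S \in H)
          (U \in cliques s u H).
Proof.
rewrite inE; apply: (iffP andP) => [[/eqP hu /forallP hS]|[hu hS]]; split => //.
- by move=> S sSU cS; have /implyP := hS S; apply; rewrite sSU cS eqxx.
- by apply/eqP.
- by apply/forallP => S; apply/implyP => /andP[a /eqP b]; apply: hS.
Qed.

Lemma sgraphP s H : reflect (forall e, e \in H -> #|e| = s) (is_sgraph s H).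
Proof.
apply: (iffP forall_inP) => h e /h; first by move/eqP.
by move=> ->.
Qed.

Lemma exists_mid A B n : A \subset B -> (#|A| <= n <= #|B|)%N ->
  exists C, [/\ A \subset C, C \subset B & #|C| = n].
Proof.
move=> sAB /andP[h1 h2].
have [d nE] : exists d, n = (#|A| + d)%N by exists (n - #|A|)%N; lia.
subst n; clear h1.
elim: d A sAB h2 => [|d IH] A sAB h2.
  by exists A; rewrite addn0.
have : B :\: A != set0.
  apply/eqP => e; have := cardsD B A; rewrite e cards0 (setIidPr sAB); lia.
case/set0Pn => x; rewrite inE => /andP[xA xB].
have h6 : x |: A \subset B by rewrite subUset sub1set xB.
have h7 : (#|x |: A| + d <= #|B|)%N by rewrite cardsU1 xA /=; lia.
have [C [h3 h4 h5]] := IH (x |: A) h6 h7.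
exists C; split => //; last by rewrite h5 cardsU1 xA /=; lia.
by apply: subset_trans h3; apply: subsetUr.
Qed.

Lemma cliques_set0 t : cliques t t.+1 (set0 : {set {set T}}) = set0.
Proof.
apply/setP => U; rewrite in_set0.
apply/negP => /cliquesP [hU hS].
have [C [_ h1 h2]] := @exists_mid set0 U t (sub0set _) ltac:(rewrite cards0 hU; lia).
by have := hS C h1 h2; rewrite inE.
Qed.

Lemma cliques_self s H : is_sgraph s H -> cliques s s H = H.
Proof.
move/sgraphP => hH; apply/setP => U; apply/cliquesP/idP => [[hU hS]|hU].
  by apply: hS.
split; first exact: hH.
move=> S sSU cS; suff -> : S = U by [].
by apply/eqP; rewrite eqEcard sSU cS (hH _ hU) leqnn.
Qed.

Lemma cliques_cliques s t H : (s <= t)%N ->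
  cliques t t.+1 (cliques s t H) = cliques s t.+1 H.
Proof.
move=> hst; apply/setP => U; apply/cliquesP/cliquesP => [[hU hS]|[hU hS]].
  split=> // A sAU cA.
  have [C [h1 h2 h3]] := @exists_mid A U t sAU ltac:(rewrite cA hU; lia).
  by have /cliquesP [_ hC] := hS C h2 h3; apply: hC.
split=> // S sSU cS; apply/cliquesP; split=> // A sAS cA.
by apply: hS => //; apply: subset_trans sAS sSU.
Qed.

Lemma card_sep F (P : pred {set T}) :
  (#|[set e in F | P e]| + #|[set e in F | ~~ P e]|)%N = #|F|.
Proof.
rewrite -!sum1_card (bigID P (mem F)) /=; congr (_ + _)%N.
  by apply: eq_bigl => e; rewrite inE.
by apply: eq_bigl => e; rewrite inE.
Qed.

Lemma double_count m F : is_sgraph m F ->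
  (\sum_(v : T) #|[set e in F | v \in e]|)%N = (m * #|F|)%N.
Proof.
move/sgraphP => hF.
transitivity (\sum_(v : T) \sum_(e in F) ((v \in e) : nat))%N.
  apply: eq_bigr => v _; rewrite -sum1_card big_mkcond [RHS]big_mkcond /=.
  by apply: eq_bigr => e _; rewrite inE; case: (e \in F); case: (v \in e).
rewrite exchange_big /=.
transitivity (\sum_(e in F) m)%N.
  apply: eq_bigr => e eF; rewrite -(hF e eF) -sum1_card [RHS]big_mkcond /=.
  by apply: eq_bigr => v _.
by rewrite sum_nat_const mulnC.
Qed.
End Comb.
End MB.
Import MB.
Module MC.

Section Link.
Variable T : finType.
Variables (n : nat) (F : {set {set T}}) (v : T).
Hypothesis hF : is_sgraph n F.
Let G := cliques n n.+1 F.
Let Fin := [set e in F | v \in e].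
Let Fout := [set e in F | v \notin e].
Let Gin := [set K in G | v \in K].
Let Gout := [set K in G | v \notin K].

Lemma inj_D1 (A : {set {set T}}) : (forall K, K \in A -> v \in K) ->
  #|[set K :\ v | K in A]| = #|A|.
Proof.
move=> hA; apply: card_in_imset => K1 K2 /hA h1 /hA h2 e.
by rewrite -(setD1K h1) -(setD1K h2) e.
Qed.

Lemma Gin_le_Fout : (#|Gin| <= #|Fout|)%N.
Proof.
rewrite -inj_D1; last by move=> K; rewrite inE => /andP[].
apply: subset_leq_card; apply/subsetP => S /imsetP [K].
rewrite inE => /andP [/cliquesP [cK hK] vK] ->.
rewrite inE setD11 andbT; apply: hK; first exact: subD1set.
by have := cardsD1 v K; rewrite vK cK; lia.
Qed.

Lemma Gout_sub : Gout \subset cliques n n.+1 Fout.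
Proof.
apply/subsetP => K; rewrite inE => /andP [/cliquesP [cK hK] vK].
apply/cliquesP; split => // S sSK cS; rewrite inE hK //=.
by apply/negP => vS; move/negP: vK; apply; apply: (subsetP sSK).
Qed.

Lemma G_split : #|G| = (#|Gin| + #|Gout|)%N.
Proof. by rewrite /Gin /Gout card_sep. Qed.

Lemma F_split : #|F| = (#|Fin| + #|Fout|)%N.
Proof. by rewrite /Fin /Fout card_sep. Qed.

Lemma Gin_Fin : (0 < n)%N -> #|Fin| = 0%N -> #|Gin| = 0%N.
Proof.
move=> n0 /eqP; rewrite cards_eq0 => /eqP e0; apply/eqP; rewrite cards_eq0.
apply/eqP/setP => K; rewrite in_set0 inE; apply/negP => /andP [/cliquesP [cK hK] vK].
have [S [h1 h2 h3]] := @exists_mid _ [set v] K n ltac:(by rewrite sub1set)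
  ltac:(by rewrite cards1 cK; lia).
have : S \in Fin by rewrite inE hK // -sub1set.
by rewrite e0 inE.
Qed.

Definition link := [set e :\ v | e in Fin].

Lemma card_link : #|link| = #|Fin|.
Proof. by rewrite inj_D1 // => K; rewrite inE => /andP[]. Qed.

Lemma link_sgraph : is_sgraph n.-1 link.
Proof.
apply/sgraphP => S /imsetP [e]; rewrite inE => /andP [eF ve] ->.
move/sgraphP: hF => hF'.
have := cardsD1 v e; rewrite ve (hF' e eF); lia.
Qed.

Lemma Gin_le_link : (0 < n)%N -> (#|Gin| <= #|cliques n.-1 n link|)%N.
Proof.
move=> n0.
rewrite -inj_D1; last by move=> K; rewrite inE => /andP[].
apply: subset_leq_card; apply/subsetP => S /imsetP [K].
rewrite inE => /andP [/cliquesP [cK hK] vK] ->.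
have cKv : #|K :\ v| = n by have := cardsD1 v K; rewrite vK cK; lia.
apply/cliquesP; split; first by [].
move=> A sA cA.
have vA : v \notin A by apply/negP => /(subsetP sA); rewrite setD11.
apply/imsetP; exists (v |: A); last by rewrite setU1K.
rewrite inE setU11 andbT; apply: hK.
  by rewrite subUset sub1set vK (subset_trans sA) // subD1set.
by rewrite cardsU1 vA cA /=; lia.
Qed.
End Link.
End MC.
Import MC.
Module MD.
Local Open Scope ring_scope.

Definition Qprop (R : realType) k := forall (T : finType) (F : {set {set T}}) (y : R),
  is_sgraph k F -> k%:R <= y -> #|F|%:R <= rbinom y k ->
  k.+1%:R * #|cliques k k.+1 F|%:R <= (y - k%:R) * #|F|%:R.

Lemma sgraph_sub (T : finType) k (F F' : {set {set T}}) :
  F' \subset F -> is_sgraph k F -> is_sgraph k F'.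
Proof.
move=> sub /sgraphP hF; apply/sgraphP => e eF'; apply: hF; exact: (subsetP sub).
Qed.

Lemma cliques_sgraph (T : finType) s u (H : {set {set T}}) : is_sgraph u (cliques s u H).
Proof. by apply/sgraphP => e /cliquesP []. Qed.

Lemma pv0 (R : realType) (T : finType) (F : {set {set T}}) (y : R) v :
  is_sgraph 1 F -> #|F|%:R <= y ->
  #|[set e in F | v \in e]|%:R <= 1 :> R ->
  1%:R * #|[set K in cliques 1 2 F | v \in K]|%:R
    <= (y - 1%:R) * #|[set e in F | v \in e]|%:R.
Proof.
move=> hF hFy hv.
have hs := F_split T F v.
have hG := Gin_le_Fout T 1 F v hF.
have : (#|[set e in F | v \in e]| <= 1)%N by rewrite -(ler_nat R).
rewrite leq_eqVlt ltnS leqn0 => /orP [/eqP e1|/eqP e0].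
  rewrite e1 mul1r mulr1 -[y - _%:R]addr0.
  have : (#|[set K in cliques 1 2 F | v \in K]| <= #|F| - 1)%N by lia.
  rewrite -(ler_nat R) => h1.
  apply: (le_trans h1); rewrite natrB; last by lia.
  lra.
by rewrite (Gin_Fin T 1 F v hF) // e0 !mulr0.
Qed.

Lemma pvS (R : realType) k (T : finType) (F : {set {set T}}) (y : R) v :
  Qprop R k.+1 -> is_sgraph k.+2 F -> k.+2%:R <= y ->
  #|[set e in F | v \in e]|%:R <= rbinom (y - 1) k.+1 ->
  k.+2%:R * #|[set K in cliques k.+2 k.+3 F | v \in K]|%:R
    <= (y - k.+2%:R) * #|[set e in F | v \in e]|%:R.
Proof.
move=> Q hF hy hv.
have h1 := Gin_le_link T k.+2 F v hF isT.
have hl := link_sgraph T k.+2 F v hF.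
have := Q T (link T F v) (y - 1) hl ltac:(rewrite -nat1r in hy; lra)
  ltac:(by rewrite card_link).
rewrite card_link => h2.
have h3 : k.+2%:R * #|[set K in cliques k.+2 k.+3 F | v \in K]|%:R
   <= k.+2%:R * #|cliques k.+1 k.+2 (link T F v)|%:R :> R.
  by rewrite ler_wpM2l // ler_nat.
apply: (le_trans h3); apply: (le_trans h2).
by rewrite -[k.+2%:R]nat1r; apply: ler_wpM2r => //; lra.
Qed.
End MD.
Import MD.
Module ME.
Local Open Scope ring_scope.

Lemma KK (R : realType) k : (0 < k)%N -> Qprop R k.
Proof.
elim: k => [//|k IHk] _ T F.
have [m] := ubnP #|F|; elim: m F => // m IHm F ltFm y hF hy hFy.
case: (boolP [exists v, rbinom (y - 1) k < #|[set e in F | v \in e]|%:R]).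
- case/existsP => v hv.
  have hFs := F_split T F v.
  have hGs := G_split T k.+1 F v.
  have hGin := Gin_le_Fout T k.+1 F v hF.
  have hGout := subset_leq_card (Gout_sub T k.+1 F v).
  have hFo : is_sgraph k.+1 [set e in F | v \notin e].
    by apply: sgraph_sub hF; apply/subsetP => e; rewrite inE => /andP[].
  move: hv hFs hGs hGin hGout hFo.
  set Fo := [set e in F | v \notin e].
  set a := #|[set e in F | v \in e]|.
  move=> hv hFs hGs hGin hGout hFo.
  have c0 : 0 <= rbinom (y - 1) k by apply: rbinom_ge0; rewrite -nat1r in hy; lra.
  have a1 : (0 < a)%N by rewrite -(ltr0n R); lra.
  have hFo_r : #|Fo|%:R < rbinom (y - 1) k.+1.
    move: hFy; rewrite hFs natrD pascal => hFy.
    have : (a%:R : R) + #|Fo|%:R <= rbinom (y - 1) k.+1 + rbinom (y - 1) k by [].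
    lra.
  have ltFo : (#|Fo| < m)%N by lia.
  have hGle : (#|cliques k.+1 k.+2 F| <= #|Fo| + #|cliques k.+1 k.+2 Fo|)%N by lia.
  move: hGle; rewrite -(ler_nat R) natrD => hGle.
  case: (lerP (k.+1%:R) (y - 1)) => hy1.
  + have IH := IHm Fo ltFo (y - 1) hFo hy1 (ltW hFo_r).
    have e1 := @rbinomSl R y k.
    have e2 : k.+1%:R * (a%:R + #|Fo|%:R) <= k.+1%:R * rbinom y k.+1 :> R.
      by rewrite ler_wpM2l // -natrD -hFs.
    have e3 : y * rbinom (y - 1) k <= y * a%:R.
      apply: ler_wpM2l; last exact: ltW; rewrite -nat1r in hy; have := ler0n R k; lra.
    have e4 : k.+2%:R * #|cliques k.+1 k.+2 F|%:R <=
              k.+2%:R * (#|Fo|%:R + #|cliques k.+1 k.+2 Fo|%:R) :> R.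
      by rewrite ler_wpM2l.
    rewrite hFs natrD.
    move: IH e1 e2 e3 e4; rewrite -[k.+2%:R]nat1r.
    set k1 := k.+1%:R; set b := #|Fo|%:R; set c := #|cliques _ _ Fo|%:R.
    set g := #|cliques _ _ F|%:R.
    move=> IH e1 e2 e3 e4.
    lra.
  + have hs := @rbinom_small R (y - 1) k.
    have : k%:R <= y - 1 <= k.+1%:R by apply/andP; split; rewrite -nat1r in hy *; lra.
    move/hs => hs'.
    have : (#|Fo|%:R : R) < 1%:R by rewrite -nat1r in hy1; lra.
    rewrite ltr_nat ltnS leqn0 => /eqP /cards0_eq Fo0.
    rewrite Fo0 cliques_set0 !cards0 in hGle.
    have -> : #|cliques k.+1 k.+2 F| = 0%N.
      by apply/eqP; rewrite -leqn0 -(ler_nat R); lra.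
    rewrite mulr0 mulr_ge0 //; lra.
- rewrite negb_exists => /forallP hall.
  have pv : forall v, k.+1%:R * #|[set K in cliques k.+1 k.+2 F | v \in K]|%:R
     <= (y - k.+1%:R) * #|[set e in F | v \in e]|%:R.
    move=> v; have := hall v; rewrite -leNgt => hv.
    destruct k as [|k'].
      by apply: pv0 => //; move: hFy hv; rewrite rbinom1 rbinom0.
    by apply: pvS => //; apply: IHk.
  have : \sum_(v : T) k.+1%:R * #|[set K in cliques k.+1 k.+2 F | v \in K]|%:R
     <= \sum_(v : T) (y - k.+1%:R) * #|[set e in F | v \in e]|%:R.
    by apply: ler_sum => v _; apply: pv.
  rewrite -!mulr_sumr -!natr_sum (double_count _ _ _ (cliques_sgraph _ _ _ _)) (double_count _ _ _ hF).
  rewrite !natrM => hs.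
  have k0 : (0 : R) < k.+1%:R by rewrite ltr0n.
  rewrite -(ler_pM2l k0).
  move: hs; set k1 := k.+1%:R; set k2 := k.+2%:R.
  set g := #|cliques _ _ F|%:R; set f := #|F|%:R => hs.
  lra.
Qed.
End ME.
Import ME.
Module MG.
Local Open Scope ring_scope.

Lemma step (R : realType) (T : finType) t i (G : {set {set T}}) (x : R) (I : {set T}) :
  (i < t)%N -> is_sgraph t G -> #|I| = i -> t%:R <= x ->
  (deg G I)%:R <= rbinom (x - i%:R) (t - i) ->
  (t - i).+1%:R * (deg (cliques t t.+1 G) I)%:R
    <= (x - i%:R - (t - i)%:R) * rbinom (x - i%:R) (t - i).
Proof.
move=> it /sgraphP hG cI tx hd.
set GI := [set e in G | I \subset e].
set L := [set e :\: I | e in GI].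
have inj : {in GI &, injective (fun e => e :\: I)}.
  move=> e1 e2; rewrite !inE => /andP[_ s1] /andP[_ s2] eq.
  apply/setP => z; case zI: (z \in I).
    by rewrite (subsetP s1 _ zI) (subsetP s2 _ zI).
  by have /setP/(_ z) := eq; rewrite !inE zI.
have cL : #|L| = deg G I by rewrite card_in_imset.
have hL : is_sgraph (t - i) L.
  apply/sgraphP => S /imsetP [e]; rewrite inE => /andP[eG sIe] ->.
  by rewrite cardsDS // hG // cI.
have hcl : (deg (cliques t t.+1 G) I <= #|cliques (t - i) (t - i).+1 L|)%N.
  rewrite /deg.
  have inj2 : {in [set e in cliques t t.+1 G | I \subset e] &,
      injective (fun e => e :\: I)}.
    move=> e1 e2; rewrite !inE => /andP[_ s1] /andP[_ s2] eq.
    apply/setP => z; case zI: (z \in I).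
      by rewrite (subsetP s1 _ zI) (subsetP s2 _ zI).
    by have /setP/(_ z) := eq; rewrite !inE zI.
  rewrite -(card_in_imset inj2); apply: subset_leq_card.
  apply/subsetP => S /imsetP [K]; rewrite inE => /andP [/cliquesP [cK hK] sIK] ->.
  apply/cliquesP; split; first by rewrite cardsDS // cK cI; lia.
  move=> A sA cA.
  have dA : [disjoint A & I].
    apply/pred0P => z /=; apply/negP => /andP [zA zI].
    by have := subsetP sA _ zA; rewrite inE zI.
  apply/imsetP; exists (A :|: I).
    rewrite inE subsetUr andbT; apply: hK.
      by rewrite subUset sIK (subset_trans sA) // subsetDl.
    by rewrite cardsU (disjoint_setI0 dA) cards0 cA cI; lia.
  apply/setP => z; rewrite !inE; case zI: (z \in I); last by rewrite orbF.
  rewrite orbT /=; apply/negP => zA; move/pred0P/(_ z): dA; by rewrite /= zA zI.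
have ki : (0 < t - i)%N by lia.
have yk : (t - i)%:R <= x - i%:R.
  by rewrite natrB ?(ltnW it) //; lra.
have := @KK R (t - i) ki T L (x - i%:R) hL yk ltac:(by rewrite cL).
rewrite cL => h.
apply: (le_trans _ (le_trans h _)).
  by rewrite ler_wpM2l // ler_nat.
by apply: ler_wpM2l => //; lra.
Qed.
End MG.
Import MG.
Module MM.
Local Open Scope ring_scope.

Lemma Delta_le (R : realType) (T : finType) i (G : {set {set T}}) (r : R) :
  0 <= r -> (forall I : {set T}, #|I| = i -> (deg G I)%:R <= r) ->
  (Delta i G)%:R <= r.
Proof.
move=> r0 h; rewrite /Delta.
apply: (big_ind (fun n : nat => n%:R <= r)) => //.
  by move=> a b ha hb; rewrite /maxn; case: ifP.
by move=> I /eqP; apply: h.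
Qed.

Lemma deg_le_Delta (T : finType) i (G : {set {set T}}) (I : {set T}) :
  #|I| = i -> (deg G I <= Delta i G)%N.
Proof. by move=> cI; apply: (leq_bigmax_cond I); rewrite cI. Qed.

Lemma step2 (R : realType) (T : finType) s t i (H : {set {set T}}) (x : R) (I : {set T}) :
  (i < s)%N -> (s <= t)%N -> #|I| = i -> t%:R <= x ->
  (Delta i (cliques s t H))%:R <= rbinom (x - i%:R) (t - i) ->
  (t.+1 - i)%:R * (deg (cliques s t.+1 H) I)%:R
    <= (t.+1 - i)%:R * rbinom (x - i%:R) (t.+1 - i).
Proof.
move=> his st cI tx hD.
rewrite -(cliques_cliques _ s t H st) subSn; last by lia.
rewrite rbinomS.
apply: step => //; first by lia.
  exact: cliques_sgraph.
apply: le_trans hD; rewrite ler_nat; exact: deg_le_Delta.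
Qed.

Lemma main_ind (R : realType) (T : finType) (i s : nat)
  (H : {set {set T}}) (x : R) :
  (1 <= i)%N -> (i < s)%N -> is_sgraph s H -> s%:R <= x ->
  (Delta i H)%:R <= rbinom (x - i%:R) (s - i) ->
  forall d, (x < (s + d)%:R -> cliques s (s + d) H = set0) /\
  ((s + d)%:R <= x -> (Delta i (cliques s (s + d) H))%:R <= rbinom (x - i%:R) (s + d - i)).
Proof.
move=> i1 his hH sx hD; elim => [|d [IH1 IH2]].
  rewrite addn0 cliques_self //; split => [h|//]; exfalso; lra.
rewrite addnS; set t := (s + d)%N.
have st : (s <= t)%N by rewrite /t; lia.
have k0 : (0 : R) < (t.+1 - i)%:R by rewrite ltr0n; lia.
split => hx.
- case: (ltrP x t%:R) => htx.
    by rewrite -(cliques_cliques _ s t H st) IH1 // cliques_set0.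
  have h0 : forall I : {set T}, #|I| = i -> deg (cliques s t.+1 H) I = 0%N.
    move=> I cI; have := @step2 R T s t i H x I his st cI htx (IH2 htx).
    rewrite (ler_pM2l k0) => h.
    have hs := @rbinom_small R (x - i%:R) (t - i).
    have : (t - i)%:R <= x - i%:R <= (t - i).+1%:R.
      have ti : (t - i)%:R = t%:R - i%:R :> R.
        by rewrite natrB // ltnW // (leq_trans his st).
      rewrite -nat1r ti; rewrite -nat1r in hx.
      by apply/andP; split; lra.
    move/hs; rewrite -subSn; last by lia.
    move=> h2; have : (deg (cliques s t.+1 H) I)%:R < 1%:R :> R.
      rewrite natrB ?(ltnW (leq_trans his st)) // in h2.
      rewrite -nat1r in hx; lra.
    by rewrite ltr_nat ltnS leqn0 => /eqP.
  apply/eqP; rewrite -subset0; apply/subsetP => K hK.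
  have cK : #|K| = t.+1 by move/cliquesP: hK => [].
  have [I [_ sIK cI]] := @exists_mid _ set0 K i (sub0set _)
    ltac:(by rewrite cards0 cK; lia).
  have /eqP := h0 I cI; rewrite cards_eq0 => /eqP e.
  have : K \in [set e in cliques s t.+1 H | I \subset e] by rewrite inE hK sIK.
  by rewrite /deg in e; rewrite e inE.
- have htx : t%:R <= x by rewrite -nat1r in hx; lra.
  apply: Delta_le.
    by apply: rbinom_ge0; rewrite natrB; [rewrite -nat1r in hx *; lra | lia].
  move=> I cI; have := @step2 R T s t i H x I his st cI htx (IH2 htx).
  by rewrite (ler_pM2l k0).
Qed.
End MM.
Import MM.
Local Open Scope ring_scope.

Theorem mainTheorem7 (R : realType) (T : finType) (i s u : nat)
  (H : {set {set T}}) (x : R) :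
  (1 <= i)%N -> (i < s)%N -> (s <= u)%N ->
  is_sgraph s H ->
  s%:R <= x ->
  (Delta i H)%:R <= rbinom (x - i%:R) (s - i) ->
  (x < u%:R -> cliques s u H = set0) /\
  (u%:R <= x -> (Delta i (cliques s u H))%:R <= rbinom (x - i%:R) (u - i)).
Proof.
move=> i1 his su hH sx hD.
have := @main_ind R T i s H x i1 his hH sx hD (u - s).
by rewrite subnKC.
Qed.
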